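(* Let $f:\mathbb{R}^n\times\mathbb{R}^p\to[-\infty,\infty]$ be a proper nearly convex function and $F:\mathbb{R}^n\rightrightarrows\mathbb{R}^p$ a nearly convex set-valued mapping such that $\operatorname{ri}(\operatorname{dom} f)\cap\operatorname{ri}(\operatorname{gph} F)\neq\emptyset$. Then the optimal value function $\mu(x)=\inf\{f(x,y): y\in F(x)\}$, $x\in\mathbb{R}^n$ (with $\inf\emptyset=\infty$), is nearly convex.
   Context: A set $\Omega\subset\mathbb{R}^k$ is nearly convex if there is a convex set $C$ with $C\subset\Omega\subset\overline{C}$. For an arbitrary set $\Omega$, $\operatorname{ri}\Omega=\{a\in\Omega:\exists\delta>0,\ B(a;\delta)\cap\operatorname{aff}\Omega\subset\Omega\}$. For $f:\mathbb{R}^k\to[-\infty,\infty]$: $\operatorname{dom} f=\{x:f(x)<\infty\}$, $\operatorname{epi} f=\{(x,\lambda):f(x)\le\lambda\}$; $f$ is nearly convex if $\operatorname{epi} f$ is nearly convex and proper if $\operatorname{dom} f\neq\emptyset$ and $f>-\infty$ everywhere. For $F:\mathbb{R}^n\rightrightarrows\mathbb{R}^p$, $\operatorname{gph} F=\{(x,y):y\in F(x)\}$, and $F$ is nearly convex if $\operatorname{gph}F$ is nearly convex. *)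

(* Defs.v *)
(* R^k is modelled as row vectors 'rV[R]_k
   over an arbitrary R : realType; R^n x R^p is identified with 'rV[R]_(n + p)
   via row_mx / lsubmx / rsubmx. *)
From HB Require Import structures.
From mathcomp Require Import all_boot all_order all_algebra.
From mathcomp Require Import all_classical all_reals ereal topology normedtype.
Set Implicit Arguments. Unset Strict Implicit. Unset Printing Implicit Defensive.
Import Order.TTheory GRing.Theory Num.Theory.
Import numFieldNormedType.Exports.
Local Open Scope classical_set_scope.
Local Open Scope ring_scope.

Section Defs.
Variable R : realType.

Definition convex_set_rV k (C : set 'rV[R]_k) : Prop :=
  forall a b (t : R), C a -> C b -> 0 <= t -> t <= 1 ->
    C (t *: a + (1 - t) *: b).

Definition nearly_convex_set k (O : set 'rV[R]_k) : Prop :=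
  exists C : set 'rV[R]_k, convex_set_rV C /\ C `<=` O /\ O `<=` closure C.

Definition aff k (O : set 'rV[R]_k) : set 'rV[R]_k :=
  [set x | exists (m : nat) (pt : 'I_m -> 'rV[R]_k) (c : 'I_m -> R),
     (forall i, O (pt i)) /\ \sum_(i < m) c i = 1 /\
     x = \sum_(i < m) c i *: pt i].

Definition eball k (a : 'rV[R]_k) (d : R) : set 'rV[R]_k :=
  [set x | \sum_(i < k) (x 0 i - a 0 i) ^+ 2 < d ^+ 2].

Definition ri k (O : set 'rV[R]_k) : set 'rV[R]_k :=
  [set a | O a /\ exists d : R, 0 < d /\ eball a d `&` aff O `<=` O].

Definition dom k (f : 'rV[R]_k -> \bar R) : set 'rV[R]_k :=
  [set x | (f x < +oo)%E].

(* epigraph in R^k x R = 'rV_(k + 1): v = row_mx x (lambda) *)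
Definition epi k (f : 'rV[R]_k -> \bar R) : set 'rV[R]_(k + 1) :=
  [set v | (f (lsubmx v) <= ((rsubmx v) 0 0)%:E)%E].

Definition nearly_convex_fun k (f : 'rV[R]_k -> \bar R) : Prop :=
  nearly_convex_set (epi f).

Definition proper_fun k (f : 'rV[R]_k -> \bar R) : Prop :=
  dom f !=set0 /\ (forall x, (-oo < f x)%E).

Definition gph n p (F : 'rV[R]_n -> set 'rV[R]_p) : set 'rV[R]_(n + p) :=
  [set v | F (lsubmx v) (rsubmx v)].

Definition nearly_convex_map n p (F : 'rV[R]_n -> set 'rV[R]_p) : Prop :=
  nearly_convex_set (gph F).

Definition optval n p (f : 'rV[R]_(n + p) -> \bar R)
  (F : 'rV[R]_n -> set 'rV[R]_p) (x : 'rV[R]_n) : \bar R :=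
  ereal_inf [set f (row_mx x y) | y in F x].

End Defs.

(* Main.v *)
Require Import Defs.
From HB Require Import structures.
From mathcomp Require Import all_boot all_order all_algebra.
From mathcomp Require Import all_classical all_reals ereal topology normedtype.
From mathcomp Require Import ring lra.
Import Order.TTheory GRing.Theory Num.Theory.
Import numFieldNormedType.Exports.
Local Open Scope classical_set_scope.
Local Open Scope ring_scope.



Lemma conv_comb (R : realType) k m (K : set 'rV[R]_k) (w : 'I_m -> R)
  (c : 'I_m -> 'rV[R]_k) :
  convex_set_rV K -> (forall i, 0 <= w i) -> \sum_i w i = 1 ->
  (forall i, K (c i)) -> K (\sum_i w i *: c i).
Proof.
move=> cK; elim: m w c => [|m IH] w c w0 w1 Kc.
  by move: w1; rewrite big_ord0 => /eqP; rewrite eq_sym oner_eq0.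
rewrite big_ord_recr /=; move: w1; rewrite big_ord_recr /= => w1.
set W := \sum_(i < m) w (widen_ord (leqnSn m) i) in w1 *.
have W0 : 0 <= W by apply: sumr_ge0 => i _.
have [/eqP WE|Wn0] := boolP (W == 0).
  have wz : forall i : 'I_m, w (widen_ord (leqnSn m) i) = 0.
    by move=> i; apply: (psumr_eq0P _ WE) => // j _.
  rewrite big1 ?add0r; last by move=> i _; rewrite wz scale0r.
  by move: w1; rewrite WE add0r => ->; rewrite scale1r.
have Wp : 0 < W by rewrite lt0r Wn0.
have -> : \sum_(i < m) w (widen_ord (leqnSn m) i) *: c (widen_ord (leqnSn m) i)
   = W *: \sum_(i < m) (w (widen_ord (leqnSn m) i) / W) *: c (widen_ord (leqnSn m) i).
  rewrite scaler_sumr; apply: eq_bigr => i _; by rewrite scalerA mulrC divfK.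
have -> : w ord_max = 1 - W by rewrite -w1 addrAC subrr add0r.
apply: cK => //.
- apply: IH => // [i|].
    by apply: divr_ge0.
  by rewrite -mulr_suml mulfV.
- by rewrite -w1 lerDl.
Qed.

Lemma lin_bound (R : realType) k m (P : 'M[R]_(k, m)) :
  exists K : R, 0 < K /\ forall (x : 'rV[R]_k) (e : R), 0 <= e ->
    (forall j, `|x 0 j| <= e) -> forall i, `|(x *m P) 0 i| <= K * e.
Proof.
exists (1 + \sum_j \sum_i `|P j i|); split.
  have : 0 <= \sum_j \sum_i `|P j i| by apply: sumr_ge0 => j _; apply: sumr_ge0.
  lra.
move=> x e e0 xe i; rewrite mxE.
apply: (le_trans (ler_norm_sum _ _ _)).
apply: (@le_trans _ _ (\sum_j e * \sum_i `|P j i|)).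
  apply: ler_sum => j _; rewrite normrM.
  apply: ler_pM => //.
  rewrite (bigD1 i) //= lerDl; by apply: sumr_ge0.
rewrite -mulr_sumr mulrC; apply: ler_wpM2r => //.
by rewrite lerDr.
Qed.

Lemma perturb (R : realType) m (D : 'M[R]_m) (d : R) :
  0 <= d -> m%:R * d <= 1/2 -> (forall i j, `|D i j| <= d) ->
  forall (x : 'rV[R]_m) (B : R), (forall j, `|(x *m (1%:M + D)) 0 j| <= B) ->
  forall j, `|x 0 j| <= 2 * B.
Proof.
move=> d0 md Dd x B xB j.
have [js _ Hmax] := @arg_maxP _ _ _ j xpredT (fun i => `|x 0 i|) isT.
apply: le_trans (Hmax j isT) _.
have E : x 0 js = (x *m (1%:M + D)) 0 js - (x *m D) 0 js.
  by rewrite mulmxDr mulmx1 mxE [in RHS]mxE addrK.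
have h1 : `|(x *m D) 0 js| <= m%:R * d * `|x 0 js|.
  rewrite mxE; apply: (le_trans (ler_norm_sum _ _ _)).
  apply: (@le_trans _ _ (\sum_(i < m) `|x 0 js| * d)).
    apply: ler_sum => i _; rewrite normrM; apply: ler_pM => //.
    exact: Hmax.
  rewrite sumr_const card_ord.
  have -> : (`|x 0 js| * d) *+ m = m%:R * d * `|x 0 js|.
    by rewrite -[X in X = _]mulr_natl mulrCA mulrC.
  by [].
have hB := xB js.
have h2 : `|x 0 js| <= `|(x *m (1%:M + D)) 0 js| + `|(x *m D) 0 js|.
  by rewrite {1}E; apply: ler_normB.
have h3 : m%:R * d * `|x 0 js| <= 1/2 * `|x 0 js| by apply: ler_wpM2r.
move: hB h1 h2 h3; set a := `|(x *m (1%:M + D)) 0 js|; set b := `|(x *m D) 0 js|.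
set X := `|x 0 js|; set Y := m%:R * d * X.
lra.
Qed.



Ltac fld := field; rewrite ?pnatr_eq0 ?andbT //; (repeat (apply/andP; split)); rewrite ?gt_eqF //.

Lemma cross (R : realType) m (K : set 'rV[R]_m) (r : R) :
  convex_set_rV K -> 0 < r -> (exists q, K q) ->
  (forall i (eta : R), 0 < eta -> exists q, K q /\ forall j, `|q 0 j - r * (i == j)%:R| < eta) ->
  (forall i (eta : R), 0 < eta -> exists q, K q /\ forall j, `|q 0 j + r * (i == j)%:R| < eta) ->
  exists rho : R, 0 < rho /\ forall b : 'rV[R]_m, (forall j, `|b 0 j| < rho) -> K b.
Proof.
move=> cK r0 [q0 Kq0] Hp Hm.
case: m K cK q0 Kq0 Hp Hm => [|m'] K cK q0 Kq0 Hp Hm.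
  by exists 1; split => // b _; rewrite (thinmx0 b) -(thinmx0 q0).
set m := m'.+1.
have m0 : (0 < m%:R :> R) by rewrite ltr0n.
have mn0 : (m%:R != 0 :> R) by rewrite gt_eqF.
have rn0 : r != 0 by rewrite gt_eqF.
set eta := r / (8 * m%:R).
have eta0 : 0 < eta by apply: divr_gt0 => //; apply: mulr_gt0.
have [qp Hqp] := choice (fun i => Hp i eta eta0).
have [qm Hqm] := choice (fun i => Hm i eta eta0).
pose Qp := \matrix_(i < m) qp i.
pose Qm := \matrix_(i < m) qm i.
pose Dm := (2 * r)^-1 *: (Qp - Qm).
pose Del := Dm - 1%:M.
have DmE : 1%:M + Del = Dm by rewrite /Del addrC subrK.
have r2 : 0 < (2 * r)^-1 by rewrite invr_gt0 mulr_gt0.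
have Dd : forall i j, `|Del i j| <= eta / r.
  move=> i j; rewrite !mxE.
  set A := qp i 0 j - r * (i == j)%:R; set B := qm i 0 j + r * (i == j)%:R.
  have hA : `|A| < eta by case: (Hqp i) => _ /(_ j).
  have hB : `|B| < eta by case: (Hqm i) => _ /(_ j).
  have -> : (2 * r)^-1 * (qp i 0 j - qm i 0 j) - (i == j)%:R = (2 * r)^-1 * (A - B).
    by rewrite /A /B; fld.
  rewrite normrM gtr0_norm //.
  have hAB : `|A - B| <= 2 * eta.
    have := ler_normB A B; lra.
  apply: (le_trans (ler_wpM2l (ltW r2) hAB)).
  by rewrite le_eqVlt; apply/orP; left; apply/eqP; fld.
have d0 : 0 <= eta / r by apply: divr_ge0; apply: ltW.
have md : m%:R * (eta / r) <= 1/2.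
  have -> : m%:R * (eta / r) = 1/8 by rewrite /eta; fld.
  lra.
have unitD : Dm \in unitmx.
  rewrite -row_free_unit; apply: inj_row_free => v hv; apply/rowP => j; rewrite mxE.
  have H := @perturb _ _ _ _ d0 md Dd v 0.
  rewrite DmE hv in H.
  have : `|v 0 j| <= 2 * 0 by apply: H => j'; rewrite mxE normr0.
  by rewrite mulr0 normr_le0 => /eqP.
exists eta; split => // b hb.
pose h : 'rV[R]_m := (2 * m%:R)^-1 *: ((const_mx 1 : 'rV[R]_m) *m (Qp + Qm)).
have hbd : forall j, `|h 0 j| <= eta.
  move=> j; rewrite !mxE normrM gtr0_norm; last by rewrite invr_gt0 mulr_gt0.
  under eq_bigr do rewrite !mxE mul1r.
  have : `|\sum_(i < m) (qp i 0 j + qm i 0 j)| <= m%:R * (2 * eta).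
    apply: (le_trans (ler_norm_sum _ _ _)).
    apply: (@le_trans _ _ (\sum_(i < m) 2 * eta)); last first.
      by rewrite sumr_const card_ord (mulr_natl (2 * eta)).
    apply: ler_sum => i _.
    have hA : `|qp i 0 j - r * (i == j)%:R| < eta by case: (Hqp i) => _ /(_ j).
    have hB : `|qm i 0 j + r * (i == j)%:R| < eta by case: (Hqm i) => _ /(_ j).
    have -> : qp i 0 j + qm i 0 j = (qp i 0 j - r * (i == j)%:R) + (qm i 0 j + r * (i == j)%:R).
      by ring.
    have := ler_normD (qp i 0 j - r * (i == j)%:R) (qm i 0 j + r * (i == j)%:R); lra.
  move=> H; apply: (le_trans (ler_wpM2l _ H)); first by rewrite invr_ge0 mulr_ge0.
  by rewrite le_eqVlt; apply/orP; left; apply/eqP; fld.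
pose y := m%:R *: (b - h).
have ybd : forall j, `|y 0 j| <= r / 4.
  move=> j; have -> : y 0 j = m%:R * (b 0 j - h 0 j) by rewrite /y !mxE.
  rewrite normrM ger0_norm; last by apply: ltW.
  have := hbd j; have := hb j; have := ler_normB (b 0 j) (h 0 j) => H1 H2 H3.
  apply: (@le_trans _ _ (m%:R * (2 * eta))).
    by apply: ler_wpM2l; [exact: ltW | lra].
  by rewrite le_eqVlt; apply/orP; left; apply/eqP; rewrite /eta; fld.
pose s := y *m invmx Dm.
have sD : s *m Dm = y by rewrite /s mulmxKV.
have sbd : forall j, `|s 0 j| <= r / 2.
  move=> j; have := @perturb _ _ _ _ d0 md Dd s (r / 4).
  rewrite DmE sD => /(_ ybd j) H; lra.
pose a := fun i => 2^-1 + (2 * r)^-1 * s 0 i.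
have a01 : forall i, 0 <= a i /\ a i <= 1.
  move=> i; have := sbd i; rewrite ler_norml => /andP [l u].
  have u' : (2 * r)^-1 * s 0 i <= (2 * r)^-1 * (r / 2) by apply: ler_wpM2l => //; apply: ltW.
  have l' : (2 * r)^-1 * (- (r / 2)) <= (2 * r)^-1 * s 0 i by apply: ler_wpM2l => //; apply: ltW.
  have e1 : (2 * r)^-1 * (r / 2) = 1/4 by fld.
  have e2 : (2 * r)^-1 * (- (r / 2)) = - (1/4) by fld.
  rewrite /a; split; lra.
pose c := fun i => a i *: qp i + (1 - a i) *: qm i.
have Kc : forall i, K (c i).
  move=> i; have [? ?] := a01 i; apply: cK => //.
  - by have [] := Hqp i.
  - by have [] := Hqm i.
have Ksum : K (\sum_i m%:R^-1 *: c i).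
  apply: conv_comb => //; try (by move=> i; rewrite invr_ge0 ler0n).
  by rewrite sumr_const card_ord -(mulr_natl (m%:R^-1)) mulfV.
suff -> : b = \sum_i m%:R^-1 *: c i by [].
apply/rowP => j; rewrite summxE.
have sDj := congr1 (fun M : 'rV[R]_m => M 0 j) sD; move: sDj => /=.
rewrite /y /h !mxE.
set P := \sum_(i < m) (qp i 0 j + qm i 0 j).
set S := \sum_(i < m) s 0 i * ((2 * r)^-1 * (qp i 0 j - qm i 0 j)).
have e1 : \sum_j0 s 0 j0 * Dm j0 j = S by apply: eq_bigr => i _; rewrite !mxE.
have e2 : \sum_j0 (const_mx 1 : 'rV[R]_m) 0 j0 * (Qp + Qm) j0 j = P.
  by apply: eq_bigr => i _; rewrite !mxE mul1r.
have e3 : \sum_(k < m) (m%:R^-1 *: c k) 0 j = m%:R^-1 * (2^-1 * P + S).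
  rewrite /P /S mulr_sumr -big_split mulr_sumr; apply: eq_bigr => i _.
  have -> : (m%:R^-1 *: c i) 0 j = m%:R^-1 * (a i * qp i 0 j + (1 - a i) * qm i 0 j).
    by rewrite !mxE.
  rewrite /a /=; fld.
rewrite e1 e2 e3 => ->; fld.
Qed.



Lemma closure_rowP (R : realType) k (A : set 'rV[R]_k) x :
  closure A x <-> forall e : R, 0 < e -> exists y, A y /\ forall j, `|x 0 j - y 0 j| < e.
Proof.
split.
- move=> cl e e0.
  have [y [Ay Bxy]] := cl _ (@nbhsx_ballx _ _ x e e0).
  exists y; split => // j.
  by case: Bxy => _ /(_ 0 j).
- move=> H B /nbhs_ballP [e /= e0 sB].
  have [y [Ay Hy]] := H e e0.
  exists y; split => //; apply: sB; split => // i j.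
  by rewrite (ord1 i); exact: Hy.
Qed.

Lemma convex_comb2 (R : realType) k (x y : 'rV[R]_k) (t : R) a :
  t *: (a + x) + (1 - t) *: (a + y) = a + (t *: x + (1 - t) *: y).
Proof. by rewrite !scalerDr addrACA -scalerDl [t + _]addrC subrK scale1r. Qed.

Lemma core2 (R : realType) k m (V : 'M[R]_(m,k)) (G : set 'rV[R]_k) a r :
  row_free V -> convex_set_rV G -> 0 < r ->
  (forall g, G g -> (g - a <= V)%MS) ->
  closure G a ->
  (forall i, closure G (a + r *: row i V)) ->
  (forall i, closure G (a - r *: row i V)) ->
  exists rho : R, 0 < rho /\ forall u : 'rV[R]_k, (u <= V)%MS ->
    (forall j, `|u 0 j| < rho) -> G (a + u).
Proof.
move=> fV cG r0 GV cla clp clm.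
set P := pinvmx V.
have [K1 [K10 HK]] := @lin_bound _ _ _ P.
pose K := [set b : 'rV[R]_m | G (a + b *m V)].
have cK : convex_set_rV K.
  move=> b1 b2 t K1b K2b t0 t1; rewrite /K /= mulmxDl -!scalemxAl -convex_comb2.
  exact: cG.
have PV : forall g, G g -> a + (g - a) *m P *m V = g.
  by move=> g Gg; rewrite mulmxKpV ?GV // addrC subrK.
have eVP : forall (i : 'I_m) j, (row i V *m P) 0 j = (i == j)%:R.
  by move=> i j; rewrite rowE -mulmxA mulmxVp // mulmx1 mxE eqxx eq_sym.
have approx : forall (s : R) i (eta : R), 0 < eta -> closure G (a + s *: row i V) ->
    exists q, K q /\ forall j, `|q 0 j - s * (i == j)%:R| < eta.
  move=> s i eta eta0 /closure_rowP cl.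
  have e0 : 0 < eta / (2 * K1) by apply: divr_gt0 => //; apply: mulr_gt0.
  have [g [Gg Hg]] := cl _ e0.
  exists ((g - a) *m P); split; first by rewrite /K /= PV.
  move=> j.
  have -> : ((g - a) *m P) 0 j - s * (i == j)%:R = ((g - a - s *: row i V) *m P) 0 j.
    have E : (g - a - s *: row i V) *m P = (g - a) *m P - s *: (row i V *m P).
      by rewrite mulmxBl scalemxAl.
    rewrite E -(eVP i j); set X := (g - a) *m P; set Y := row i V *m P.
    by rewrite !mxE.
  apply: (le_lt_trans (HK _ (eta / (2 * K1)) (ltW e0) _ j)).
    move=> jj.
    have -> : (g - a - s *: row i V) 0 jj = - ((a + s *: row i V) 0 jj - g 0 jj).
      by rewrite !mxE; ring.
    by rewrite normrN; apply: ltW.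
  have -> : K1 * (eta / (2 * K1)) = eta / 2 by field; rewrite gt_eqF.
  lra.
have [rho0 [rho00 Hrho]] : exists rho : R, 0 < rho /\ forall b : 'rV[R]_m,
    (forall j, `|b 0 j| < rho) -> K b.
  apply: (@cross _ _ K r) => //.
  - have [g [Gg _]] := (closure_rowP _ _ _ _).1 cla 1 ltr01.
    by exists ((g - a) *m P); rewrite /K /= PV.
  - by move=> i eta eta0; apply: approx => //; exact: clp.
  - move=> i eta eta0; have [|q [Kq Hq]] := approx (- r) i eta eta0.
      by rewrite scaleNr; exact: clm.
    by exists q; split => // j; have := Hq j; rewrite mulNr opprK.
exists (rho0 / (2 * K1)); split; first by apply: divr_gt0 => //; apply: mulr_gt0.
move=> u uV hu.
have -> : u = u *m P *m V by rewrite mulmxKpV.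
apply: (Hrho (u *m P)) => j.
apply: (le_lt_trans (HK _ (rho0 / (2 * K1)) _ _ j)).
- by apply: divr_ge0; [apply: ltW | apply: mulr_ge0 => //; apply: ltW].
- by move=> j'; apply: ltW.
- have -> : K1 * (rho0 / (2 * K1)) = rho0 / 2 by field; rewrite gt_eqF.
  lra.
Qed.



Lemma basis_ex (R : realType) k (L : set 'rV[R]_k) :
  exists m (V : 'M[R]_(m,k)), row_free V /\ (forall i, L (row i V)) /\
    (forall u, L u -> (u <= V)%MS).
Proof.
pose Pn n := `[< exists V : 'M[R]_(n,k), row_free V /\ forall i, L (row i V) >].
have P0 : Pn 0%N.
  apply/asboolP; exists 0; split; last by case.
  by rewrite /row_free -leqn0 rank_leq_row.
have ub : forall n, Pn n -> (n <= k)%N.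
  by move=> n /asboolP [V [fV _]]; rewrite -(eqP fV) rank_leq_col.
have ex : exists n, Pn n by exists 0%N.
case: (ex_maxnP ex ub) => n /asboolP [V [fV LV]] maxn.
exists n, V; split => //; split => // u Lu.
apply/negPn/negP => Hu.
suff : Pn (n + 1)%N by move/maxn; rewrite addn1 ltnn.
apply/asboolP; exists (col_mx V u); split.
- rewrite /row_free eqn_leq rank_leq_row /=.
  suff : (n < \rank (V + u)%MS)%N.
    by rewrite (addsmxE V u).1 => h; apply: (leq_trans _ h); rewrite addn1.
  have := mxrank_leqif_sup (addsmxSl V u).
  move/ltn_leqif; rewrite addsmx_sub submx_refl (negbTE Hu) /= => H.
  by move: (H); rewrite (eqP fV).
- move=> i; rewrite -(splitK i); case: (fintype.split i) => j /=.
    by rewrite rowKu.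
  by rewrite rowKd (ord1 j); have -> : row 0 u = u by apply/rowP => l; rewrite mxE.
Qed.

Lemma eball_near (R : realType) k (a x : 'rV[R]_k) (d : R) : 0 < d ->
  (forall j, `|x 0 j - a 0 j| <= d / (k.+1)%:R) -> eball a d x.
Proof.
move=> d0 H; rewrite /eball /=.
set e := d / (k.+1)%:R.
have e0 : 0 < e by apply: divr_gt0.
apply: (@le_lt_trans _ _ (\sum_(i < k) e ^+ 2)).
  apply: ler_sum => i _; have := H i; rewrite ler_norml => /andP [l u].
  move: l u; rewrite -/e; set y := x 0 i - a 0 i => l u.
  have h1 : 0 <= e - y by lra.
  have h2 : 0 <= e + y by lra.
  have := mulr_ge0 h1 h2; rewrite !expr2 => h; nra.
rewrite sumr_const card_ord.
have -> : d = (k.+1)%:R * e by rewrite /e mulrC divfK // pnatr_eq0.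
rewrite -mulr_natl.
have K0 : (0 : R) <= k%:R by rewrite ler0n.
rewrite -natr1.
move: K0; set K := k%:R => K0.
nra.
Qed.

Lemma aff_mem (R : realType) k (O : set 'rV[R]_k) a x (s : R) :
  O a -> O x -> aff O ((1 - s) *: a + s *: x).
Proof.
move=> Oa Ox.
exists 2%N, (fun i : 'I_2 => if i == ord0 then a else x),
  (fun i : 'I_2 => if i == ord0 then 1 - s else s).
split; first by move=> i; case: ifP.
by rewrite !big_ord_recl !big_ord0 /= !addr0 subrK.
Qed.

Lemma coreX (R : realType) k (O : set 'rV[R]_k) a (d : R) :
  O a -> 0 < d -> (eball a d `&` aff O `<=` O) ->
  exists m (V : 'M[R]_(m,k)) (r : R), 0 < r /\ row_free V /\
    (forall x, O x -> (x - a <= V)%MS) /\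
    (forall i, O (a + r *: row i V)) /\ (forall i, O (a - r *: row i V)).
Proof.
move=> Oa d0 Hball.
pose L := [set u : 'rV[R]_k | forall s : R, aff O (a + s *: u)].
have [m [V [fV [LV VL]]]] := @basis_ex _ _ L.
pose S := 1 + \sum_i \sum_j `|V i j|.
have Sg : 0 <= \sum_i \sum_j `|V i j| by apply: sumr_ge0 => i _; apply: sumr_ge0.
have S0 : 0 < S by rewrite /S; lra.
have VS : forall i j, `|V i j| <= S.
  move=> i j; rewrite /S (bigD1 i) //= (bigD1 j) //=.
  have : 0 <= \sum_(j0 | j0 != j) `|V i j0| by apply: sumr_ge0.
  have : 0 <= \sum_(i0 | i0 != i) \sum_j0 `|V i0 j0|.
    by apply: sumr_ge0 => i0 _; apply: sumr_ge0.
  lra.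
pose r := d / ((k.+1)%:R * S).
have k0 : (0 : R) < (k.+1)%:R by rewrite ltr0n.
have r0 : 0 < r by apply: divr_gt0 => //; apply: mulr_gt0.
have Hrow : forall i (s : R), `|s| <= r -> O (a + s *: row i V).
  move=> i s hs; apply: Hball; split; last exact: LV.
  apply: eball_near => // j.
  rewrite !mxE addrAC subrr add0r normrM.
  apply: (@le_trans _ _ (r * S)).
    by apply: ler_pM => //; exact: VS.
  rewrite /r le_eqVlt; apply/orP; left; apply/eqP; field.
  by rewrite !gt_eqF.
exists m, V, r; split => //; split => //; split.
  move=> x Ox; apply: VL => s.
  have -> : a + s *: (x - a) = (1 - s) *: a + s *: x.
    by rewrite scalerBr scalerBl scale1r addrA addrAC.
  exact: aff_mem.
split => i; first by apply: Hrow; rewrite ger0_norm //; apply: ltW.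
by rewrite -scaleNr; apply: Hrow; rewrite normrN ger0_norm //; apply: ltW.
Qed.



Lemma lsub_comb (R : realType) n1 n2 (A B : 'rV[R]_(n1 + n2)) (t s : R) :
  lsubmx (t *: A + s *: B) = t *: lsubmx A + s *: lsubmx B.
Proof. by apply/rowP => j; rewrite !mxE. Qed.

Lemma rsub_comb (R : realType) n1 n2 (A B : 'rV[R]_(n1 + n2)) (t s : R) :
  rsubmx (t *: A + s *: B) = t *: rsubmx A + s *: rsubmx B.
Proof. by apply/rowP => j; rewrite !mxE. Qed.

Lemma sc00 (R : realType) (c : R) : (c%:M : 'M[R]_1) 0 0 = c.
Proof. by rewrite mxE eqxx mulr1n. Qed.

Lemma near_split (R : realType) n1 n2 (v w : 'rV[R]_(n1 + n2)) (e : R) :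
  (forall j, `|lsubmx v 0 j - lsubmx w 0 j| < e) ->
  (forall j, `|rsubmx v 0 j - rsubmx w 0 j| < e) ->
  forall j, `|v 0 j - w 0 j| < e.
Proof.
move=> Hl Hr j; rewrite -(splitK j); case: (fintype.split j) => j' /=.
  by have := Hl j'; rewrite !mxE.
by have := Hr j'; rewrite !mxE.
Qed.

Lemma lsub_near (R : realType) n1 n2 (v w : 'rV[R]_(n1 + n2)) (e : R) :
  (forall j, `|v 0 j - w 0 j| < e) -> forall j, `|lsubmx v 0 j - lsubmx w 0 j| < e.
Proof. by move=> H j; rewrite !mxE. Qed.

Lemma rsub_near (R : realType) n1 n2 (v w : 'rV[R]_(n1 + n2)) (e : R) :
  (forall j, `|v 0 j - w 0 j| < e) -> forall j, `|rsubmx v 0 j - rsubmx w 0 j| < e.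
Proof. by move=> H j; rewrite !mxE. Qed.

Lemma diff_sub (R : realType) k m (V : 'M[R]_(m,k)) (z z' a : 'rV[R]_k) (c : R) :
  (z - a <= V)%MS -> (z' - a <= V)%MS -> (c *: (z - z') <= V)%MS.
Proof.
move=> h1 h2; apply: scalemx_sub.
have -> : z - z' = (z - a) + (-1) *: (z' - a) by rewrite scaleN1r opprB addrA subrK.
by apply: addmx_sub => //; apply: scalemx_sub.
Qed.



Theorem theorem5p2 (R : realType) (n p : nat)
  (f : 'rV[R]_(n + p) -> \bar R) (F : 'rV[R]_n -> set 'rV[R]_p) :
  proper_fun f -> nearly_convex_fun f -> nearly_convex_map F ->
  ri (dom f) `&` ri (gph F) !=set0 ->
  nearly_convex_fun (optval f F).
Proof.
move=> [_ fnoo] [Ce [cCe [CeE EcCe]]] [Cg [cCg [CgG GcCg]]].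
move=> [z0 [[dz0 [d1 [d10 H1]]] [gz0 [d2 [d20 H2]]]]].
have finf : forall z, dom f z -> f z = (fine (f z))%:E.
  by move=> z dz; rewrite fineK // fin_numElt; apply/andP; split; [exact: fnoo | exact: dz].
pose E := [set w : 'rV[R]_(n + p + 1) | exists w', Ce w' /\ lsubmx w' = lsubmx w /\
  rsubmx w' 0 0 <= rsubmx w 0 0].
have cE : convex_set_rV E.
  move=> w1 w2 t [w1' [C1 [l1 r1]]] [w2' [C2 [l2 r2]]] t0 t1.
  exists (t *: w1' + (1 - t) *: w2'); split; first exact: cCe.
  rewrite !lsub_comb l1 l2; split => //.
  rewrite !rsub_comb !mxE.
  have t1' : 0 <= 1 - t by lra.
  move: r1 r2; rewrite !mxE => r1 r2.
  by apply: lerD; apply: ler_wpM2l.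
have CeE' : Ce `<=` E by move=> w Cw; exists w.
have Eepi : E `<=` epi f.
  move=> w [w' [Cw [lw rw]]]; have := CeE _ Cw; rewrite /epi /= lw => h.
  by apply: (le_trans h); rewrite lee_fin.
have [mg [Vg [rg [rg0 [fVg [GVg [Gp Gm]]]]]]] := @coreX _ _ _ _ _ gz0 d20 H2.
have [rho2 [rho20 HCg]] : exists rho : R, 0 < rho /\ forall u : 'rV[R]_(n + p),
    (u <= Vg)%MS -> (forall j, `|u 0 j| < rho) -> Cg (z0 + u).
  apply: (@core2 _ _ _ _ _ _ _ fVg cCg rg0).
  - by move=> g Cgg; apply: GVg; apply: CgG.
  - exact: GcCg.
  - by move=> i; apply: GcCg; apply: Gp.
  - by move=> i; apply: GcCg; apply: Gm.
have [mf [Vf [rf [rf0 [fVf [DVf [Dp Dm]]]]]]] := @coreX _ _ _ _ _ dz0 d10 H1.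
pose Sf : R := \sum_i (`|fine (f (z0 + rf *: row i Vf))| +
  `|fine (f (z0 - rf *: row i Vf))|).
pose M : R := 1 + `|fine (f z0)| + Sf.
have sum0 : 0 <= Sf by apply: sumr_ge0 => i _; apply: addr_ge0.
have Mb0 : fine (f z0) + 1 <= M.
  have := ler_norm (fine (f z0)); rewrite /M; lra.
have Mbi : forall i, fine (f (z0 + rf *: row i Vf)) + 1 <= M /\
                     fine (f (z0 - rf *: row i Vf)) + 1 <= M.
  move=> i.
  have : `|fine (f (z0 + rf *: row i Vf))| + `|fine (f (z0 - rf *: row i Vf))| <= Sf.
    rewrite /Sf (bigD1 i) //= lerDl; by apply: sumr_ge0 => j _; apply: addr_ge0.
  have := ler_norm (fine (f (z0 + rf *: row i Vf))).
  have := ler_norm (fine (f (z0 - rf *: row i Vf))).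
  have := normr_ge0 (fine (f z0)).
  have := normr_ge0 (fine (f (z0 + rf *: row i Vf))).
  have := normr_ge0 (fine (f (z0 - rf *: row i Vf))).
  rewrite /M; split; lra.
pose GM := [set z : 'rV[R]_(n + p) | E (row_mx z (M%:M))].
have GMdom : forall z, GM z -> dom f z.
  move=> z /Eepi; rewrite /epi /dom /= row_mxKl row_mxKr sc00 => h.
  exact: (le_lt_trans h (ltry _)).
have cGM : convex_set_rV GM.
  move=> z1 z2 t G1 G2 t0 t1.
  have := cE _ _ t G1 G2 t0 t1.
  rewrite /GM /= !scale_row_mx add_row_mx.
  have -> : t *: M%:M + (1 - t) *: M%:M = M%:M :> 'M[R]_1.
    by rewrite -scalerDl [t + _]addrC subrK scale1r.
  by [].
have clGM : forall z, dom f z -> fine (f z) + 1 <= M -> closure GM z.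
  move=> z dz Mz; apply/closure_rowP => e e0.
  pose w : 'rV[R]_(n + p + 1) := row_mx z ((fine (f z))%:M).
  have ew : epi f w by rewrite /epi /= row_mxKl row_mxKr sc00 -(finf z dz).
  have e1 : 0 < Num.min e 1 by rewrite lt_min e0 ltr01.
  have [w'' [Cw Hw]] := (closure_rowP _ _ _ _).1 (EcCe _ ew) _ e1.
  have m1 : Num.min e 1 <= 1 by rewrite ge_min lexx orbT.
  have m2 : Num.min e 1 <= e by rewrite ge_min lexx.
  exists (lsubmx w''); split.
  - exists w''; split => //; split; first by rewrite row_mxKl.
    rewrite row_mxKr sc00.
    have := @rsub_near _ _ _ _ _ _ Hw 0; rewrite /w row_mxKr sc00 distrC => h.
    have := ler_norm (rsubmx w'' 0 0 - fine (f z)); lra.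
  - move=> j; have := @lsub_near _ _ _ _ _ _ Hw j; rewrite /w row_mxKl => h; lra.
have [rho1 [rho10 HGM]] : exists rho : R, 0 < rho /\ forall u : 'rV[R]_(n + p),
    (u <= Vf)%MS -> (forall j, `|u 0 j| < rho) -> GM (z0 + u).
  apply: (@core2 _ _ _ _ _ _ _ fVf cGM rf0).
  - by move=> g /GMdom; apply: DVf.
  - by apply: clGM => //; exact: Mb0.
  - by move=> i; apply: clGM; [exact: Dp | exact: (Mbi i).1].
  - by move=> i; apply: clGM; [exact: Dm | exact: (Mbi i).2].
pose T := [set v : 'rV[R]_(n + 1) | exists y : 'rV[R]_p,
   E (row_mx (row_mx (lsubmx v) y) (rsubmx v)) /\ Cg (row_mx (lsubmx v) y)].
exists T; split.
  move=> v1 v2 t [y1 [E1 C1]] [y2 [E2 C2]] t0 t1.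
  exists (t *: y1 + (1 - t) *: y2).
  rewrite lsub_comb rsub_comb.
  have eq1 : row_mx (t *: lsubmx v1 + (1 - t) *: lsubmx v2) (t *: y1 + (1 - t) *: y2)
    = t *: row_mx (lsubmx v1) y1 + (1 - t) *: row_mx (lsubmx v2) y2.
    by rewrite !scale_row_mx !add_row_mx.
  rewrite eq1; split; last exact: cCg.
  have -> : row_mx (t *: row_mx (lsubmx v1) y1 + (1 - t) *: row_mx (lsubmx v2) y2)
      (t *: rsubmx v1 + (1 - t) *: rsubmx v2) =
    t *: row_mx (row_mx (lsubmx v1) y1) (rsubmx v1) +
    (1 - t) *: row_mx (row_mx (lsubmx v2) y2) (rsubmx v2).
    by rewrite !scale_row_mx !add_row_mx.
  exact: cE.
split.
  move=> v [y [Ev Cv]]; rewrite /epi /optval /=.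
  have := Eepi _ Ev; rewrite /epi /= row_mxKl row_mxKr => h.
  apply: le_trans h; apply: ereal_inf_lbound; exists y => //.
  by have := CgG _ Cv; rewrite /gph /= row_mxKl row_mxKr.
move=> v hv; rewrite /epi /= in hv.
apply/closure_rowP => e e0.
pose eps := e / 4.
have eps0 : 0 < eps by apply: divr_gt0.
have hlt : (optval f F (lsubmx v) < (rsubmx v 0 0 + eps)%:E)%E.
  by apply: le_lt_trans hv _; rewrite lte_fin ltrDl.
have [_ [y Fy <-] fy] := ereal_inf_lt hlt.
pose z := row_mx (lsubmx v) y.
have gz : gph F z by rewrite /gph /= row_mxKl row_mxKr.
have dz : dom f z by apply: lt_trans fy (ltry _).
pose a := fine (f z).
have fa : f z = a%:E := finf z dz.
have alt : a < rsubmx v 0 0 + eps by move: fy; rewrite -/z fa lte_fin.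
pose x0 := lsubmx z0.
pose B := \sum_j `|x0 0 j - lsubmx v 0 j|.
have B0 : 0 <= B by apply: sumr_ge0.
have Bj : forall j, `|x0 0 j - lsubmx v 0 j| <= B.
  by move=> j; rewrite /B (bigD1 j) //= lerDl; apply: sumr_ge0.
pose D := `|M| + `|a| + 1 + B.
have D0 : 0 < D by have := normr_ge0 M; have := normr_ge0 a; rewrite /D; lra.
pose t := eps / (D + eps).
have t0 : 0 < t by apply: divr_gt0 => //; apply: addr_gt0.
have htD : t * (D + eps) = eps by rewrite /t; field; rewrite gt_eqF // addr_gt0.
have teps : 0 < t * eps by apply: mulr_gt0.
have tD : t * D < eps by move: htD; rewrite mulrDr; lra.
have t1 : t <= 1.
  rewrite /t ler_pdivrMr; last by apply: addr_gt0.
  rewrite mul1r; lra.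
pose rho' := Num.min (Num.min rho1 rho2) (Num.min eps 1) / 2.
have rmin : 0 < Num.min (Num.min rho1 rho2) (Num.min eps 1).
  by rewrite !lt_min rho10 rho20 eps0 ltr01.
have rho'0 : 0 < rho' by apply: divr_gt0.
have rle : Num.min (Num.min rho1 rho2) (Num.min eps 1) <= rho1 /\
           Num.min (Num.min rho1 rho2) (Num.min eps 1) <= rho2 /\
           Num.min (Num.min rho1 rho2) (Num.min eps 1) <= eps /\
           Num.min (Num.min rho1 rho2) (Num.min eps 1) <= 1.
  by rewrite !ge_min !lexx !orbT.
have rho'1 : rho' < rho1 /\ rho' < rho2 /\ rho' < eps /\ rho' <= 1/2.
  move: rle rmin; rewrite /rho'; set mm := Num.min _ _ => rle rmin; lra.
pose eta := t * rho'.
have eta0 : 0 < eta by apply: mulr_gt0.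
have etar : eta <= rho'.
  by rewrite /eta; apply: ler_piMl => //; apply: ltW.
pose c := (1 - t) / t.
have c0 : 0 <= c by apply: divr_ge0; [lra | apply: ltW].
have ceta : c * eta = (1 - t) * rho' by rewrite /c /eta; field; rewrite gt_eqF.
have cbound : forall u u' : 'rV[R]_(n + p), (forall j, `|u 0 j - u' 0 j| < eta) ->
    forall j, `|(c *: (u - u')) 0 j| < Num.min rho1 rho2.
  move=> u u' H j; rewrite !mxE normrM ger0_norm //.
  apply: (@le_lt_trans _ _ (c * eta)); first by apply: ler_wpM2l => //; apply: ltW.
  rewrite ceta lt_min; have : (1 - t) * rho' <= rho'.
    by apply: ler_piMl; [apply: ltW | lra].
  move=> h; apply/andP; split; lra.
have [zg [Czg Hzg]] := (closure_rowP _ _ _ _).1 (GcCg _ gz) _ eta0.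
pose w : 'rV[R]_(n + p + 1) := row_mx z (a%:M).
have ew : epi f w by rewrite /epi /= row_mxKl row_mxKr sc00 fa.
have [w'' [Cw Hw]] := (closure_rowP _ _ _ _).1 (EcCe _ ew) _ eta0.
pose ze := lsubmx w''.
pose lam'' := rsubmx w'' 0 0.
have Hze : forall j, `|z 0 j - ze 0 j| < eta.
  by move=> j; have := @lsub_near _ _ _ _ _ _ Hw j; rewrite /w row_mxKl.
have Hl : `|a - lam''| < eta.
  by have := @rsub_near _ _ _ _ _ _ Hw 0; rewrite /w row_mxKr sc00.
have dze : dom f ze.
  have := CeE _ Cw; rewrite /epi /dom /= => h; exact: (le_lt_trans h (ltry _)).
pose g1 := z0 + c *: (z - zg).
have Cg1 : Cg g1.
  apply: HCg; first by apply: (@diff_sub _ _ _ _ _ _ z0); apply: GVg => //; apply: CgG.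
  move=> j; have := cbound _ _ Hzg j; rewrite lt_min => /andP [_ h]; exact: h.
pose zt := t *: g1 + (1 - t) *: zg.
have Czt : Cg zt by apply: cCg => //; apply: ltW.
have ztE : zt = (1 - t) *: z + t *: z0.
  by apply/rowP => j; rewrite !mxE /c; field; rewrite gt_eqF.
pose g2 := z0 + c *: (z - ze).
have Gg2 : GM g2.
  apply: HGM; first by apply: (@diff_sub _ _ _ _ _ _ z0); apply: DVf.
  move=> j; have := cbound _ _ Hze j; rewrite lt_min => /andP [h _]; exact: h.
pose wt := t *: row_mx g2 (M%:M) + (1 - t) *: w''.
have Ewt : E wt by apply: cE => //; [apply: CeE' | apply: ltW].
have lwt : lsubmx wt = zt.
  rewrite /wt lsub_comb row_mxKl ztE; apply/rowP => j; rewrite !mxE /c; field.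
  by rewrite gt_eqF.
have rwt : rsubmx wt 0 0 = t * M + (1 - t) * lam''.
  by rewrite /wt rsub_comb row_mxKr /lam'' !mxE eqxx mulr1n.
pose X := t * M + (1 - t) * lam''.
pose lamT := Num.max (rsubmx v 0 0) X.
exists (row_mx (lsubmx zt) (lamT%:M)); split.
  exists (rsubmx zt); rewrite row_mxKl row_mxKr hsubmxK; split => //.
  have [w' [Cw' [lw' rw']]] := Ewt.
  exists w'; split => //; split; first by rewrite lw' lwt row_mxKl.
  rewrite row_mxKr sc00; apply: (le_trans rw'); rewrite rwt -/X /lamT.
  by rewrite le_max lexx orbT.
apply: near_split.
  move=> j; rewrite row_mxKl ztE lsub_comb /z row_mxKl !mxE.
  have := Bj j; rewrite /x0 !mxE => hB.
  set xj := v 0 (lshift 1 j); set x0j := z0 0 (lshift p j).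
  have -> : xj - ((1 - t) * xj + t * x0j) = - (t * (x0j - xj)) by ring.
  rewrite normrN normrM gtr0_norm //.
  have : t * `|x0j - xj| <= t * D.
    by apply: ler_wpM2l; [apply: ltW | move: hB; rewrite /D; have := normr_ge0 M; have := normr_ge0 a; lra].
  rewrite /eps in tD; lra.
move=> j; rewrite (ord1 j) row_mxKr sc00.
have hML : M - lam'' <= D.
  have := ler_norm M; have := ler_norm (- a); rewrite normrN.
  have := ler_norm (a - lam''); rewrite /D; lra.
have htM : t * (M - lam'') <= t * D by apply: ler_wpM2l => //; apply: ltW.
have Xe : X = lam'' + t * (M - lam'') by rewrite /X; ring.
have e4 : e = 4 * eps by rewrite /eps; field.
have hal : lam'' < a + eta by have := ler_norm (lam'' - a); rewrite distrC in Hl; lra.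
case: (lerP X (rsubmx v 0 0)) => hX.
  by rewrite /lamT max_l // subrr normr0.
rewrite /lamT max_r; last exact: ltW.
rewrite distrC ger0_norm; last by rewrite subr_ge0; apply: ltW.
lra.
Qed.
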